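(* For all $M>0$, all $q$ with $|q|<1$ and all $\epsilon>0$ there exist constants $C_1,C_2>0$ such that for all $p$ with $|p|<|q|$ we have $C_1\le|(z;p,q)|\le C_2$ for all $z$ with $|z|\le M$ and $|1-z/w|>\epsilon$ for every zero $w$ of $(z;p,q)$.
   Context: $(z;p,q)=\prod_{r,s\ge0}(1-zp^rq^s)$; its zeros are $p^{-r}q^{-s}$, $r,s\ge0$. The paper phrases the condition on $z$ as ''$z$ away from the set of zeros''. *)

(* Defs.v *)
From HB Require Import structures.
From mathcomp Require Import all_boot all_order all_algebra.
From mathcomp Require Import all_classical all_reals all_analysis.
From mathcomp Require Import complex.
Set Implicit Arguments. Unset Strict Implicit. Unset Printing Implicit Defensive.
Import Order.TTheory GRing.Theory Num.Theory.
Import numFieldNormedType.Exports.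
Local Open Scope ring_scope.
Local Open Scope complex_scope.

(* Equip C = R[i] with its standard (norm-induced) topology, exactly as
   MathComp-Analysis does for every numFieldType via R^o. *)
#[non_forgetful_inheritance]
HB.instance Definition _ (R : realType) := PseudoPointedMetric.copy R[i] (R[i])^o.

Definition ell_partial (R : realType) (z p q : R[i]) (N : nat) : R[i] :=
  \prod_(r < N) \prod_(s < N) (1 - z * p ^+ r * q ^+ s).

(* The elliptic gamma-type double product (z; p, q) = prod_{r,s >= 0} (1 - z p^r q^s),
   defined as the limit of the square partial products (the product converges
   absolutely for |p|, |q| < 1, so this is its value). *)
Definition ellprod (R : realType) (z p q : R[i]) : R[i] :=
  limn (ell_partial z p q).

(* w is a zero of (.; p, q): some factor 1 - w p^r q^s vanishes, i.e. w = p^-r q^-s. *)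
Definition ellprod_zero (R : realType) (p q w : R[i]) : Prop :=
  exists r s : nat, w * p ^+ r * q ^+ s = 1.

(* Main.v *)
Require Import Defs.
From HB Require Import structures.
From mathcomp Require Import all_boot all_order all_algebra.
From mathcomp Require Import all_classical all_reals all_analysis.
From mathcomp Require Import complex.
From mathcomp Require Import lra ring.
Import Order.TTheory GRing.Theory Num.Theory.
Import numFieldNormedType.Exports.
Local Open Scope ring_scope.
Local Open Scope complex_scope.
Section S.
Context {R : realType}.
Definition nc (x : R[i]) : R := complex.Re `|x|.
Lemma ncE (x : R[i]) : `|x| = (nc x)%:C.
Proof. by rewrite /nc; case: x. Qed.
Lemma nc_ge0 x : 0 <= nc x.
Proof. by rewrite /nc normc_def /= sqrtr_ge0. Qed.
Lemma ncM x y : nc (x * y) = nc x * nc y.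
Proof. by apply: complexI; rewrite rmorphM /= -!ncE normrM. Qed.
Lemma ncD x y : nc (x + y) <= nc x + nc y.
Proof. by rewrite -lecR rmorphD /= -!ncE ler_normD. Qed.
Lemma ncN x : nc (- x) = nc x.
Proof. by rewrite /nc normrN. Qed.
Lemma ncB x y : nc (x - y) <= nc x + nc y.
Proof. by rewrite -(ncN y) ncD. Qed.
Lemma nc1 : nc 1 = 1.
Proof. by apply: complexI; rewrite -ncE normr1. Qed.
Lemma ncX x n : nc (x ^+ n) = nc x ^+ n.
Proof. by apply: complexI; rewrite rmorphXn /= -!ncE normrX. Qed.
Lemma ncR (r : R) : nc r%:C = `|r|.
Proof. by rewrite /nc normc_def /= expr0n /= addr0 sqrtr_sqr. Qed.
Lemma ncBr x y : nc x - nc y <= nc (x - y).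
Proof. have := ncD (x - y) y. rewrite subrK. lra. Qed.
Lemma ncV x : nc (x^-1) = (nc x)^-1.
Proof. by apply: complexI; rewrite -ncE normfV ncE fmorphV. Qed.
Lemma prodE m (F : nat -> R[i]) : \sum_(i<m) nc (F i) <= 1/2 ->
  nc (\prod_(i<m) (1 - F i) - 1) <= 2 * \sum_(i<m) nc (F i).
Proof.
elim: m F => [|m IH] F.
  by rewrite !big_ord0 subrr /nc normr0 /= mulr0.
rewrite big_ord_recl [in X in _ -> X]big_ord_recl big_ord_recl /= => Hs.
have h0 := nc_ge0 (F 0%N).
have hS : \sum_(i < m) nc (F i.+1) <= 1/2.
  apply: le_trans Hs; rewrite lerDr //.
have := IH (fun i => F i.+1) hS => /= IHm.
set P := \prod_(i < m) _ in IHm *.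
set S := \sum_(i < m) _ in IHm hS *.
have -> : (1 - F 0%N) * P - 1 = (1 - F 0%N) * (P - 1) - F 0%N by ring.
apply: le_trans (ncB _ _) _; rewrite ncM.
have h1 : nc (1 - F 0%N) <= 1 + nc (F 0%N) by rewrite -nc1 ncB.
have h2 := nc_ge0 (P - 1).
have h3 : nc (1 - F 0%N) * nc (P - 1) <= (1 + nc (F 0%N)) * (2 * S).
  apply: le_trans (ler_wpM2r h2 h1) _; apply: ler_wpM2l => //; lra.
have hS0 : 0 <= S by rewrite /S sumr_ge0 // => i _; exact: nc_ge0.
nra.
Qed.
Lemma prod_lb m (G : nat -> R[i]) a : 0 <= a ->
  (forall i, (i < m)%N -> a <= nc (G i)) -> a ^+ m <= nc (\prod_(i<m) G i).
Proof.
move=> a0; elim: m => [|m IH] H; first by rewrite big_ord0 nc1 expr0.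
rewrite big_ord_recr /= ncM exprSr; apply: ler_pM => //.
  exact: exprn_ge0.
by apply: IH => i lt; apply: H; apply: ltnW.
exact: H.
Qed.
Lemma prod_ub m (G : nat -> R[i]) b :
  (forall i, (i < m)%N -> nc (G i) <= b) -> nc (\prod_(i<m) G i) <= b ^+ m.
Proof.
elim: m => [|m IH] H; first by rewrite big_ord0 nc1 expr0.
rewrite big_ord_recr /= ncM exprSr; apply: ler_pM => //.
- exact: nc_ge0.
- exact: nc_ge0.
- by apply: IH => i lt; apply: H; apply: ltnW.
- exact: H.
Qed.
Lemma geo (t : R) m : 0 <= t -> t < 1 -> \sum_(i<m) t ^+ i <= (1 - t)^-1.
Proof.
move=> t0 t1.
have E : (\sum_(i<m) t ^+ i) * (1 - t) = 1 - t ^+ m.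
  elim: m => [|m IH]; first by rewrite big_ord0 expr0 mul0r subrr.
  by rewrite big_ord_recr /= mulrDl IH exprSr; ring.
have t1' : 0 < 1 - t by lra.
rewrite -(ler_pM2r t1') mulVf ?gt_eqF // E.
have := exprn_ge0 m t0; lra.
Qed.
End S.
Section T.
Context {R : realType}.
Variables z p q : R[i].
Definition aa (r s : nat) := z * p ^+ r * q ^+ s.
Definition QQ (n : nat) := (\prod_(r < n) (1 - aa r n)) * \prod_(s < n.+1) (1 - aa n s).
Lemma stepP N : ell_partial z p q N.+1 = ell_partial z p q N * QQ N.
Proof.
rewrite /ell_partial /QQ big_ord_recr /=.
under eq_bigr => r _ do rewrite big_ord_recr /=.
by rewrite big_split /= mulrA.
Qed.
Lemma shiftP K m : ell_partial z p q (K + m) = ell_partial z p q K * \prod_(i<m) QQ (K + i).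
Proof.
elim: m => [|m IH]; first by rewrite addn0 big_ord0 mulr1.
by rewrite addnS stepP IH big_ord_recr /= -mulrA.
Qed.
End T.
Lemma exK (R : realType) (t d : R) : 0 <= t -> t < 1 -> 0 < d -> exists K : nat, t ^+ K <= d.
Proof.
move=> t0 t1 d0.
have : `|t| < 1 by rewrite ger0_norm.
move=> /cvg_expr /cvgr_dist_lt /(_ _ d0) [N _ HN].
exists N; have := HN N (leqnn N); rewrite /= sub0r normrN ger0_norm ?exprn_ge0 //.
exact: ltW.
Qed.
Lemma cvg_of_cauchy (R : realType) (v : nat -> R) (t c : R) (K : nat) :
  0 <= t -> t < 1 -> 0 <= c ->
  (forall n m, (K <= n)%N -> `|v (n + m)%N - v n| <= c * t ^+ n) -> cvgn v.
Proof.
move=> t0 t1 c0 H.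
apply: cauchy_cvg; apply: cauchy_exP => e e0.
have c1 : 0 < c + 1 by lra.
have [N HN] := @exK R t _ t0 t1 (divr_gt0 e0 c1).
exists (v (K + N)%N); exists (K + N)%N => // n /= hn.
rewrite -ball_normE /ball_ /=.
have := H (K + N)%N (n - (K + N))%N (leq_addr _ _).
rewrite subnKC // distrC => h; apply: le_lt_trans h _.
have tK : t ^+ (K + N) <= t ^+ N.
  rewrite exprD; apply: ler_piMl; [exact: exprn_ge0|apply: exprn_ile1 => //; exact: ltW].
have : c * t ^+ (K + N) <= c * (e / (c + 1)).
  by apply: ler_wpM2l => //; apply: le_trans tK HN.
have : c * (e / (c + 1)) < e.
  rewrite mulrA ltr_pdivrMr // mulrC ltr_pM2l //; lra.
lra.
Qed.
Section C.
Context {R : realType}.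
Lemma nc_Re (x : R[i]) : `|complex.Re x| <= nc x.
Proof.
case: x => a b; rewrite /nc normc_def /= -sqrtr_sqr ler_sqrt; last by nra.
have := sqr_ge0 b; lra.
Qed.
Lemma nc_Im (x : R[i]) : `|complex.Im x| <= nc x.
Proof.
case: x => a b; rewrite /nc normc_def /= -sqrtr_sqr ler_sqrt; last by nra.
have := sqr_ge0 a; lra.
Qed.
Lemma nc_ReIm (x : R[i]) : nc x <= `|complex.Re x| + `|complex.Im x|.
Proof.
case: x => a b; rewrite /nc normc_def /=.
have ha := normr_ge0 a; have hb := normr_ge0 b.
rewrite -[X in _ <= X]ger0_norm ?addr_ge0 // -sqrtr_sqr ler_sqrt; last by nra.
have Ea : `|a| ^+ 2 = a ^+ 2 by rewrite real_normK ?num_real.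
have Eb : `|b| ^+ 2 = b ^+ 2 by rewrite real_normK ?num_real.
rewrite sqrrD Ea Eb; nra.
Qed.
Lemma cvgC (u : nat -> R[i]) (t c : R) (K : nat) :
  0 <= t -> t < 1 -> 0 <= c ->
  (forall n m, (K <= n)%N -> nc (u (n + m)%N - u n) <= c * t ^+ n) ->
  exists l : R[i], (u @ \oo --> l)%classic.
Proof.
move=> t0 t1 c0 H.
have cRe : cvgn (fun n => complex.Re (u n)).
  apply: (@cvg_of_cauchy R _ t c K) => // n m hn.
  apply: le_trans (H n m hn); rewrite -raddfB /=; exact: nc_Re.
have cIm : cvgn (fun n => complex.Im (u n)).
  apply: (@cvg_of_cauchy R _ t c K) => // n m hn.
  apply: le_trans (H n m hn); rewrite -raddfB /=; exact: nc_Im.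
exists (limn (fun n => complex.Re (u n)) +i* limn (fun n => complex.Im (u n))).
apply/(@cvgrPdist_lt R[i] R[i]^o) => e e0.
have [e1 e2] : complex.Im e = 0 /\ 0 < complex.Re e.
  by move: e0; rewrite ltcE /= => /andP[/eqP <- ->].
have eE : e = (complex.Re e)%:C by case: e e1 {e0 e2} => ? ? /= ->.
have e3 : 0 < complex.Re e / 2 by lra.
move: cRe => /cvgr_dist_lt /(_ _ e3) hR.
move: cIm => /cvgr_dist_lt /(_ _ e3) hI.
near=> n.
rewrite ncE eE ltcR.
apply: le_lt_trans (nc_ReIm _) _.
rewrite /=.
have h1 : `|limn (fun n => complex.Re (u n)) - complex.Re (u n)| < complex.Re e / 2 by near: n.
have h2 : `|limn (fun n => complex.Im (u n)) - complex.Im (u n)| < complex.Re e / 2 by near: n.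
move: h1 h2; case: (u n) => a b /=. lra.
Unshelve. all: by end_near.
Qed.
Lemma lim_bounds (u : nat -> R[i]) (l : R[i]) (K : nat) (C1 C2 : R) :
  (u @ \oo --> l)%classic ->
  (forall n, (K <= n)%N -> C1 <= nc (u n) <= C2) ->
  limn u = l /\ C1 <= nc l <= C2.
Proof.
move=> hl hb; split; first exact: (cvg_lim (@norm_hausdorff _ R[i]^o)).
have key : forall d, 0 < d -> exists n, (K <= n)%N /\ nc (l - u n) < d.
  move=> d d0.
  have d0' : (0 : R[i]) < d%:C by rewrite ltcR.
  move: hl => /(@cvgr_dist_lt _ R[i]^o) /(_ _ d0') [N _ HN].
  exists (maxn K N); split; first exact: leq_maxl.
  by have := HN (maxn K N) (leq_maxr _ _); rewrite /= ncE ltcR.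
apply/andP; split.
  rewrite leNgt; apply/negP => h.
  have [n [hn hd]] := key (C1 - nc l) ltac:(lra).
  have := ncD l (u n - l); rewrite addrC subrK.
  have := hb n hn; rewrite -(ncN (u n - l)) opprB; move=> /andP[? ?]. lra.
rewrite leNgt; apply/negP => h.
have [n [hn hd]] := key (nc l - C2) ltac:(lra).
have := ncD (u n) (l - u n); rewrite addrC subrK.
have := hb n hn; move=> /andP[? ?]. lra.
Qed.
End C.
Lemma telesc {R : realType} (u : nat -> R[i]) (t d : R) (K : nat) :
  0 <= t -> t < 1 -> 0 <= d ->
  (forall j, (K <= j)%N -> nc (u j.+1 - u j) <= d * t ^+ j) ->
  forall n m, (K <= n)%N -> nc (u (n + m)%N - u n) <= d / (1 - t) * t ^+ n.
Proof.
move=> t0 t1 d0 H n m hn.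
have : nc (u (n + m)%N - u n) <= d * t ^+ n * \sum_(i<m) t ^+ i.
  elim: m => [|m IH]; first by rewrite addn0 subrr big_ord0 mulr0 /nc normr0.
  rewrite big_ord_recr /= mulrDr addnS.
  have -> : u (n + m).+1 - u n = (u (n + m).+1 - u (n + m)%N) + (u (n + m)%N - u n) by ring.
  apply: le_trans (ncD _ _) _; rewrite addrC; apply: lerD => //.
  rewrite -mulrA -exprD; apply: H; exact: leq_trans hn (leq_addr _ _).
move=> h; apply: le_trans h _.
have hg := geo t m t0 t1.
have := exprn_ge0 n t0 => tn.
rewrite [d / _ * _]mulrAC; apply: ler_wpM2l => //.
by rewrite mulr_ge0.
Qed.
Section Bd.
Context {R : realType}.
Variables (z p q : R[i]) (M t : R).
Hypotheses (Hz : nc z <= M) (Hp : nc p <= t) (Hq : nc q <= t) (t0 : 0 <= t) (t1 : t < 1) (M0 : 0 < M).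
Local Notation g := (M / (1 - t)).
Local Ltac prep := have _t0 := t0; have _t1 := t1; have _M0 := M0.
Lemma g_ge0 : 0 <= g.
Proof. apply: divr_ge0; [exact: ltW | rewrite subr_ge0; exact: ltW]. Qed.
Lemma aa_b r s : nc (aa z p q r s) <= M * t ^+ (r + s).
Proof.
prep.
rewrite /aa !ncM !ncX exprD mulrA.
have h1 : nc p ^+ r <= t ^+ r by apply: lerXn2r; rewrite ?nnegrE ?nc_ge0.
have h2 : nc q ^+ s <= t ^+ s by apply: lerXn2r; rewrite ?nnegrE ?nc_ge0.
apply: ler_pM; rewrite ?exprn_ge0 ?nc_ge0 //.
  by rewrite mulr_ge0 ?exprn_ge0 ?nc_ge0.
apply: ler_pM; rewrite ?exprn_ge0 ?nc_ge0 //.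
Qed.
Lemma alpha n : \sum_(r<n) nc (aa z p q r n) <= g * t ^+ n.
Proof.
prep.
have h : \sum_(r<n) nc (aa z p q r n) <= \sum_(r<n) (M * t ^+ n) * t ^+ r.
  apply: ler_sum => r _; rewrite -mulrA -exprD addnC; exact: aa_b.
apply: le_trans h _.
rewrite -mulr_sumr [X in _ <= X]mulrAC; apply: ler_wpM2l.
  by rewrite mulr_ge0 ?exprn_ge0 //; exact: ltW.
exact: geo.
Qed.
Lemma beta n : \sum_(s<n.+1) nc (aa z p q n s) <= g * t ^+ n.
Proof.
prep.
have h : \sum_(s<n.+1) nc (aa z p q n s) <= \sum_(s<n.+1) (M * t ^+ n) * t ^+ s.
  apply: ler_sum => s _; rewrite -mulrA -exprD; exact: aa_b.
apply: le_trans h _.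
rewrite -mulr_sumr [X in _ <= X]mulrAC; apply: ler_wpM2l.
  by rewrite mulr_ge0 ?exprn_ge0 //; exact: ltW.
exact: geo.
Qed.
Lemma QQ_b n : g * t ^+ n <= 1/8 -> nc (QQ z p q n - 1) <= 8 * g * t ^+ n.
Proof.
prep.
move=> hx.
set x := g * t ^+ n in hx *.
have x0 : 0 <= x by rewrite /x mulr_ge0 ?g_ge0 ?exprn_ge0.
have hA := @prodE R n (fun r => aa z p q r n) ltac:(have := alpha n; rewrite -/x; lra).
have hB := @prodE R n.+1 (fun s => aa z p q n s) ltac:(have := beta n; rewrite -/x; lra).
have hA' : nc (\prod_(r<n) (1 - aa z p q r n) - 1) <= 2 * x.
  apply: le_trans hA _; have := alpha n; rewrite -/x; lra.
have hB' : nc (\prod_(s<n.+1) (1 - aa z p q n s) - 1) <= 2 * x.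
  apply: le_trans hB _; have := beta n; rewrite -/x; lra.
rewrite /QQ.
set A := \prod_(r<n) _ in hA' *.
set B := \prod_(s<n.+1) _ in hB' *.
have -> : A * B - 1 = A * (B - 1) + (A - 1) by ring.
apply: le_trans (ncD _ _) _; rewrite ncM.
have hAn : nc A <= 1 + nc (A - 1).
  by have := ncD (A - 1) 1; rewrite subrK nc1; lra.
have := nc_ge0 (B - 1); have := nc_ge0 (A - 1); have := nc_ge0 A.
rewrite -mulrA -/x.
nra.
Qed.
Lemma tail_b K m : g * t ^+ K <= (1 - t) / 32 -> nc (\prod_(i<m) QQ z p q (K + i) - 1) <= 1/2.
Proof.
prep.
move=> hK.
have gK0 : 0 <= g * t ^+ K by rewrite mulr_ge0 ?g_ge0 ?exprn_ge0.
have hF : forall i, nc (1 - QQ z p q (K + i)) <= 8 * (g * t ^+ K) * t ^+ i.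
  move=> i; rewrite -(ncN (1 - _)) opprB.
  have hle : g * t ^+ (K + i) <= g * t ^+ K.
    apply: ler_wpM2l; first exact: g_ge0.
    rewrite exprD; apply: ler_piMr; [exact: exprn_ge0|apply: exprn_ile1 => //; exact: ltW].
  have h8 : g * t ^+ (K + i) <= 1/8.
    have h32 : (1 - t) / 32 <= 1/8 by lra.
    lra.
  have := QQ_b (K + i) h8.
  by rewrite exprD !mulrA.
have hS : \sum_(i<m) nc (1 - QQ z p q (K + i)) <= 1/4.
  have h : \sum_(i<m) nc (1 - QQ z p q (K + i)) <= \sum_(i<m) (8 * (g * t ^+ K)) * t ^+ i.
    by apply: ler_sum => i _; exact: hF.
  apply: le_trans h _.
  rewrite -mulr_sumr.
  have hg := geo t m t0 t1.
  have s0 : 0 <= \sum_(i<m) t ^+ i by rewrite sumr_ge0 // => i _; exact: exprn_ge0.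
  have t1' : 0 < 1 - t by lra.
  have : (\sum_(i<m) t ^+ i) * (1 - t) <= 1.
    by rewrite -(ler_pM2r t1') mulVf ?gt_eqF // in hg.
  have : g * t ^+ K * 32 <= 1 - t by rewrite -ler_pdivlMr //.
  nra.
have := @prodE R m (fun i => 1 - QQ z p q (K + i)) ltac:(lra).
have -> : \prod_(i<m) (1 - (1 - QQ z p q (K + i))) = \prod_(i<m) QQ z p q (K + i).
  by apply: eq_bigr => i _; ring.
lra.
Qed.
Lemma head_b K (e0 : R) : 0 < e0 -> (forall r s, e0 <= nc (1 - aa z p q r s)) ->
  (e0 ^+ K) ^+ K <= nc (ell_partial z p q K) <= ((1 + M) ^+ K) ^+ K.
Proof.
prep.
move=> e00 He; apply/andP; split.
  apply: (@prod_lb R K (fun r => \prod_(s<K) (1 - aa z p q r s))).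
    exact: exprn_ge0 (ltW e00).
  move=> r _; apply: (@prod_lb R K (fun s => 1 - aa z p q r s)) => //.
  exact: ltW.
apply: (@prod_ub R K (fun r => \prod_(s<K) (1 - aa z p q r s))).
move=> r _; apply: (@prod_ub R K (fun s => 1 - aa z p q r s)) => s _.
apply: le_trans (ncB _ _) _; rewrite nc1 lerD2l.
apply: le_trans (aa_b r s) _.
rewrite -[X in _ <= X]mulr1; apply: ler_wpM2l; first lra.
apply: exprn_ile1 => //; exact: ltW.
Qed.
End Bd.
Theorem lemmaA2 (R : realType) (M : R) (q : R[i]) (eps : R) :
  0 < M -> `|q| < 1 -> 0 < eps ->
  exists C1 C2 : R, 0 < C1 /\ 0 < C2 /\
    forall p : R[i], `|p| < `|q| ->
      forall z : R[i], `|z| <= M%:C ->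
        (forall w : R[i], ellprod_zero p q w -> eps%:C < `|1 - z / w|) ->
        C1%:C <= `|ellprod z p q| <= C2%:C.
Proof.
move=> M0 q1 eps0.
set t := nc q.
have t0 : 0 <= t := nc_ge0 q.
have t1 : t < 1 by move: q1; rewrite ncE ltcE /= => /andP[_ h].
have tt : 0 < 1 - t by lra.
have d0 : 0 < (1 - t) ^+ 2 / (32 * M).
  by apply: divr_gt0; [exact: exprn_gt0 | lra].
have [K HK] := @exK R t _ t0 t1 d0.
have hK : M / (1 - t) * t ^+ K <= (1 - t) / 32.
  have -> : (1 - t) / 32 = M / (1 - t) * ((1 - t) ^+ 2 / (32 * M)).
    by field; apply/andP; split; apply/negP => /eqP; lra.
  apply: ler_wpM2l => //; apply: divr_ge0; lra.
set e1 := Num.min eps 1.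
have e10 : 0 < e1 by rewrite lt_min eps0 ltr01.
have e1e : e1 <= eps by rewrite ge_min lexx.
have e11 : e1 <= 1 by rewrite ge_min lexx orbT.
have C10 : 0 < e1 ^+ K ^+ K / 2 by apply: divr_gt0; rewrite ?exprn_gt0 //.
have C20 : 0 < (1 + M) ^+ K ^+ K * (3/2).
  by apply: mulr_gt0; rewrite ?exprn_gt0 //; lra.
exists (e1 ^+ K ^+ K / 2), ((1 + M) ^+ K ^+ K * (3/2)).
split => //; split => //.
move=> p hp z hz hw.
have Hp : nc p <= t by move: hp; rewrite !ncE ltcE /= => /andP[_ h]; exact: ltW.
have Hq : nc q <= t by [].
have Hz : nc z <= M by move: hz; rewrite ncE lecE /= => /andP[_ h].
have hf : forall r s, e1 <= nc (1 - aa z p q r s).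
  move=> r s; rewrite /aa -mulrA.
  case: (eqVneq (p ^+ r * q ^+ s) 0) => hx.
    by rewrite hx mulr0 subr0 nc1.
  have hw1 : ellprod_zero p q (p ^+ r * q ^+ s)^-1.
    by exists r, s; rewrite -mulrA mulVf.
  have hz0 := hw _ hw1.
  move: hz0; rewrite invrK ncE ltcR => h; lra.
have hb : forall n, (K <= n)%N ->
    e1 ^+ K ^+ K / 2 <= nc (ell_partial z p q n) <= (1 + M) ^+ K ^+ K * (3/2).
  move=> n hn; rewrite -(subnKC hn) shiftP ncM.
  have /andP[h1 h2] := @head_b _ z p q M t Hz Hp Hq t0 t1 M0 K e1 e10 hf.
  have hT := @tail_b _ z p q M t Hz Hp Hq t0 t1 M0 K (n - K) hK.
  set T := \prod_(i < n - K) _ in hT *.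
  have hT1 : nc T <= 3/2 by have := ncD (T - 1) 1; rewrite subrK nc1; lra.
  have hT2 : 1/2 <= nc T.
    have := ncBr 1 T; rewrite nc1 -(ncN (1 - T)) opprB; lra.
  have := nc_ge0 (ell_partial z p q K).
  have := exprn_ge0 K (exprn_ge0 K (ltW e10)).
  move=> ha hb0; apply/andP; split; nra.
set u := ell_partial z p q.
have g0 : 0 <= M / (1 - t) by apply: divr_ge0; lra.
have hstep : forall j, (K <= j)%N ->
    nc (u j.+1 - u j) <= ((1 + M) ^+ K ^+ K * (3/2) * (8 * (M / (1 - t)))) * t ^+ j.
  move=> j hj; rewrite /u stepP.
  have -> : ell_partial z p q j * QQ z p q j - ell_partial z p q j
      = ell_partial z p q j * (QQ z p q j - 1) by ring.
  rewrite ncM -mulrA.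
  have /andP[_ hu] := hb j hj.
  have h8 : M / (1 - t) * t ^+ j <= 1/8.
    have : M / (1 - t) * t ^+ j <= M / (1 - t) * t ^+ K.
      apply: ler_wpM2l => //; rewrite -(subnKC hj) exprD.
      apply: ler_piMr; [exact: exprn_ge0|apply: exprn_ile1 => //; exact: ltW].
    have : (1 - t) / 32 <= 1/8 by lra.
    lra.
  have hq := @QQ_b _ z p q M t Hz Hp Hq t0 t1 M0 j h8.
  apply: ler_pM => //; rewrite ?nc_ge0 //.
have hd : 0 <= (1 + M) ^+ K ^+ K * (3/2) * (8 * (M / (1 - t))).
  have h1M : 0 <= 1 + M by lra.
  apply: mulr_ge0; last by apply: mulr_ge0.
  apply: mulr_ge0; [exact: exprn_ge0 (exprn_ge0 _ h1M) | lra].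
have [l hl] := @cvgC _ u t _ K t0 t1 (divr_ge0 hd (ltW tt)) (@telesc _ u t _ K t0 t1 hd hstep).
have [hlim hlb] := @lim_bounds _ u l K _ _ hl hb.
by rewrite /ellprod -/u hlim ncE !lecR.
Qed.
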